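(* Let $m=2^{l_m}$ with $l_m\ge1$, let $(v_0,\dots,v_{m-1})$ be a Cantor basis of $\mathbb{F}_{2^m}$, let $0\le l<m/2$, $n=m\cdot 2^l$ and $n_p=n/m=2^l$. Define the $\mathbb{F}_2$-linear map $E_\Sigma:\mathbb{F}_2[x]_{<n}\to\mathbb{F}_{2^m}^{\,n_p}$ by $$E_\Sigma(A)=\bigl(A(v_{l+m/2}+u)\bigr)_{u\in V_l}$$ (i.e. evaluation of $A$, viewed as a polynomial over $\mathbb{F}_{2^m}$, at the $n_p$ points of $\Sigma=v_{l+m/2}+V_l$). Then $E_\Sigma$ is a bijection between $\mathbb{F}_2[x]_{<n}$ and $\mathbb{F}_{2^m}^{\,n_p}$.
   Context: A Cantor basis of $\mathbb{F}_{2^m}$ (for $m$ a power of $2$) is an $\mathbb{F}_2$-basis $(v_0,\dots,v_{m-1})$ of $\mathbb{F}_{2^m}$ with $v_0=1$ and $v_i^2+v_i=v_{i-1}$ for $0<i<m$. For $0\le i\le m$ let $V_0=\{0\}$ and $V_i=\mathrm{span}_{\mathbb{F}_2}\{v_0,\dots,v_{i-1}\}$. $\mathbb{F}_2[x]_{<n}$ denotes the polynomials over $\mathbb{F}_2$ of degree less than $n$. *)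

(* Defs.v *)
From HB Require Import structures.
From mathcomp Require Import all_boot all_order all_algebra all_field.
Set Implicit Arguments. Unset Strict Implicit. Unset Printing Implicit Defensive.
Import GRing.Theory.
Local Open Scope ring_scope.

Definition bitcomb (F : finFieldType) (v : nat -> F) (i : nat)
  (b : {ffun 'I_i -> bool}) : F :=
  \sum_(j < i) (if b j then v j else 0).

Definition Vspan (F : finFieldType) (v : nat -> F) (i : nat) : {set F} :=
  [set bitcomb v b | b : {ffun 'I_i -> bool}].

Definition cantor_basis (F : finFieldType) (m : nat) (v : nat -> F) : Prop :=
  [/\ bijective (@bitcomb F v m),
      v 0%N = 1
    & forall i : nat, (0 < i < m)%N -> v i ^+ 2 + v i = v i.-1].

(* Evaluation of a polynomial over F_2 at a point of F
   (viewing its coefficients in the prime subfield of F). *)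
Definition evalF2 (F : finFieldType) (A : {poly 'F_2}) (x : F) : F :=
  (map_poly (fun c : 'F_2 => (val c)%:R : F) A).[x].

(* Main.v *)
Require Import Defs.
From HB Require Import structures.
From mathcomp Require Import all_boot all_order all_algebra all_field.
From mathcomp Require Import zify.
Import GRing.Theory.
Local Open Scope ring_scope.
Set Implicit Arguments. Unset Strict Implicit.

Section Char2.
Variable F : finFieldType.
Hypothesis ch : (2%N \in [pchar F]).

Lemma sq_add (x y : F) : (x + y) ^+ 2 = x ^+ 2 + y ^+ 2.
Proof. by rewrite sqrrD mulr2n addrr_pchar2 // addr0. Qed.

Lemma pow2_add e (x y : F) : (x + y) ^+ (2 ^ e) = x ^+ (2 ^ e) + y ^+ (2 ^ e).
Proof.
elim: e x y => [|e IH] x y; first by rewrite !expr1.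
by rewrite expnS !exprM sq_add IH.
Qed.

Lemma pow2_inj e (x y : F) : x ^+ (2 ^ e) = y ^+ (2 ^ e) -> x = y.
Proof.
move=> H; have : (x + y) ^+ (2 ^ e) = 0 by rewrite pow2_add H addrr_pchar2.
move/eqP; rewrite expf_eq0 => /andP [_ /eqP].
by move/(canRL (addrK y)); rewrite add0r oppr_pchar2.
Qed.

Definition s (x : F) := x ^+ 2 + x.

Lemma sD x y : s (x + y) = s x + s y.
Proof. by rewrite /s sq_add addrACA. Qed.

Lemma s0 : s 0 = 0.
Proof. by rewrite /s expr0n addr0. Qed.

Lemma iter_sD t x y : iter t s (x + y) = iter t s x + iter t s y.
Proof. by elim: t => //= t ->; rewrite sD. Qed.

Lemma iter_s0 t : iter t s 0 = 0.
Proof. by elim: t => //= t ->; rewrite s0. Qed.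

Lemma iter_s_sum (I : Type) (r : seq I) (P : pred I) (G : I -> F) t :
  iter t s (\sum_(i <- r | P i) G i) = \sum_(i <- r | P i) iter t s (G i).
Proof. exact: (big_morph _ (iter_sD t) (iter_s0 t)). Qed.

Lemma iter_s_pow t e x : iter t s (x ^+ (2 ^ e)) = (iter t s x) ^+ (2 ^ e).
Proof.
elim: t => //= t ->; rewrite /s pow2_add -!exprM mulnC //.
Qed.

Lemma iter_pow2 a x : iter (2 ^ a) s x = x ^+ (2 ^ (2 ^ a)) + x.
Proof.
elim: a x => [|a IH] x; first by rewrite /= /s expn1.
rewrite expnS mul2n -addnn iterD !IH pow2_add -exprM -expnD addnn -mul2n.
by rewrite -expnS -addrA (addrA (x ^+ (2 ^ 2 ^ a))) (addrr_pchar2 ch) add0r.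
Qed.

Definition f2 := (fun c : 'F_2 => (val c)%:R : F).

Lemma f2_cases (c : 'F_2) : c = 0 \/ c = 1.
Proof. by case: c => [[|[|k]] Hk]; [left|right|]; try apply: val_inj. Qed.

Lemma f2_0 : f2 0 = 0. Proof. by []. Qed.

Lemma f2_sq (c : 'F_2) : f2 c ^+ 2 = f2 c.
Proof. by case: (f2_cases c) => ->; rewrite /f2 /= ?expr0n ?expr1n. Qed.

Lemma f2B (c d : 'F_2) : f2 (c - d) = f2 c - f2 d.
Proof.
case: (f2_cases c) => ->; case: (f2_cases d) => -> ; rewrite /f2 /= ?subrr ?subr0 ?sub0r ?oppr_pchar2 //.
Qed.


Lemma evalF2E (P : {poly 'F_2}) (x : F) : evalF2 P x = (map_poly f2 P).[x].
Proof. by []. Qed.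

Lemma evalF2_sq (P : {poly 'F_2}) (x : F) : evalF2 P (x ^+ 2) = (evalF2 P x) ^+ 2.
Proof.
rewrite !evalF2E.
have := horner_map (pFrobenius_aut ch) (map_poly f2 P) x.
rewrite /= !pFrobenius_autE => <-; congr horner.
apply/polyP => i; rewrite coef_map_id0; last exact: rmorph0.
rewrite coef_map_id0 ?pFrobenius_aut0 // coef_map_id0 // pFrobenius_autE f2_sq //.
Qed.

Lemma evalF2_pow2 e (P : {poly 'F_2}) (x : F) : evalF2 P (x ^+ (2 ^ e)) = (evalF2 P x) ^+ (2 ^ e).
Proof.
elim: e => [|e IH]; first by rewrite !expr1.
by rewrite expnSr !exprM evalF2_sq IH.
Qed.

Lemma evalF2B (P Q : {poly 'F_2}) (x : F) : evalF2 (P - Q) x = evalF2 P x - evalF2 Q x.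
Proof.
rewrite !evalF2E -hornerN -hornerD; congr horner.
apply/polyP => i; rewrite coefB !coef_map_id0 ?f2_0 // coefB f2B //.
Qed.
End Char2.

Section Cantor.
Variable F : finFieldType.
Hypothesis ch : (2%N \in [pchar F]).
Variable m : nat.
Variable v : nat -> F.
Hypothesis hv0 : v 0%N = 1.
Hypothesis hvs : forall i : nat, (0 < i < m)%N -> v i ^+ 2 + v i = v i.-1.

Lemma iter_s_v t j : (j < m)%N ->
  iter t (s (F:=F)) (v j) = if (t <= j)%N then v (j - t)%N else 0.
Proof.
move=> Hj; elim: t => [|t IH] /=; first by rewrite subn0.
rewrite IH; case: (ltngtP t j) => H.
- rewrite /s hvs ?subnS //.
  by rewrite subn_gt0 H /= (leq_ltn_trans (leq_subr _ _) Hj).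
- exact: s0.
- by rewrite H subnn hv0 /s expr1n (addrr_pchar2 ch).
Qed.

Lemma iter_s_bitcomb t i (b : {ffun 'I_i -> bool}) : (i <= m)%N -> (i <= t)%N ->
  iter t (s (F:=F)) (bitcomb v b) = 0.
Proof.
move=> Him Hit; rewrite /bitcomb iter_s_sum //; apply: big1 => j _.
case: (b j); last exact: iter_s0.
rewrite iter_s_v ?(leq_trans (ltn_ord j)) // ifF //.
by apply/negbTE; rewrite -ltnNge (leq_trans (ltn_ord j)).
Qed.

End Cantor.

Section Orbit.
Variable F : finFieldType.
Hypothesis ch : (2%N \in [pchar F]).
Variable lm : nat.
Notation m := (2 ^ lm.+1)%N.
Notation h := (2 ^ lm)%N.
Hypothesis Hcard : #|F| = (2 ^ m)%N.
Variable v : nat -> F.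
Hypothesis hv0 : v 0%N = 1.
Hypothesis hvs : forall i : nat, (0 < i < m)%N -> v i ^+ 2 + v i = v i.-1.

Lemma fixed_mult (x : F) e c : x ^+ (2 ^ e) = x -> x ^+ (2 ^ (e * c)) = x.
Proof.
move=> H; elim: c => [|c IH]; first by rewrite muln0 expr1.
by rewrite mulnS expnD exprM H IH.
Qed.

Lemma frob_card (x : F) : x ^+ (2 ^ m) = x.
Proof. by rewrite -Hcard expf_card. Qed.

Lemma h_lt_m : (h < m)%N.
Proof. by rewrite ltn_exp2l. Qed.

Lemma a_not_fixed : v h ^+ (2 ^ h) != v h.
Proof.
have H1 := iter_pow2 ch lm (v h).
have H2 := iter_s_v ch hv0 hvs h h_lt_m.
rewrite leqnn subnn hv0 in H2.
apply/eqP => E; rewrite E (addrr_pchar2 ch) H2 in H1.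
by move: (oner_neq0 F); rewrite H1 eqxx.
Qed.

Lemma orbit_inj i j : (i < m)%N -> (j < m)%N ->
  v h ^+ (2 ^ i) = v h ^+ (2 ^ j) -> i = j.
Proof.
wlog Hij : i j / (i <= j)%N.
  move=> W Hi Hj E; case: (leqP i j) => hij; first exact: W.
  by symmetry; apply: W => //; exact: ltnW.
move=> Hi Hj E.
set d := (j - i)%N.
have Hjd : j = (d + i)%N by rewrite subnK.
rewrite Hjd expnD exprM in E.
have Fd := pow2_inj ch E.
case: (posnP d) => [d0|dpos]; first by move: Hjd; rewrite d0.
have [u _ /dvdnP [c Hc]] := Bezoutl m dpos.
have Fg : v h ^+ (2 ^ gcdn d m) = v h.
  have := fixed_mult c (esym Fd); rewrite mulnC -Hc expnD mulnC exprM.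
  by rewrite mulnC fixed_mult //; exact: frob_card.
have p2 : prime 2 by [].
have [e He Hg] := dvdn_pfactor (gcdn d m) lm.+1 p2 (dvdn_gcdr d m).
have gd : (gcdn d m <= d)%N by apply: dvdn_leq dpos (dvdn_gcdl d m).
have dm : (d < m)%N by apply: leq_ltn_trans (leq_subr _ _) Hj.
have He' : (e <= lm)%N.
  rewrite leqNgt; apply/negP => He2.
  have ee : e = lm.+1 by apply/eqP; rewrite eqn_leq He He2.
  by move: (leq_ltn_trans gd dm); rewrite Hg ee ltnn.
have : v h ^+ (2 ^ h) = v h.
  set a := v h; rewrite -(subnKC He') expnD fixed_mult // -Hg; exact: Fg.
by move/eqP; rewrite (negbTE a_not_fixed).
Qed.

Variable l : nat.
Hypothesis Hl : (l < h)%N.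
Notation k := (l + h)%N.

Lemma l_le_m : (l <= m)%N.
Proof. by rewrite expnS; lia. Qed.

Lemma k_lt_m : (k < m)%N.
Proof. by rewrite expnS; lia. Qed.

Lemma iter_w (b : {ffun 'I_l -> bool}) :
  iter l (s (F:=F)) (v k + bitcomb v b) = v h.
Proof.
rewrite (iter_sD ch) (iter_s_bitcomb ch hv0 hvs) ?l_le_m // addr0.
by rewrite (iter_s_v ch hv0 hvs _ k_lt_m) leq_addr addKn.
Qed.

Hypothesis Hbij : bijective (@bitcomb F v m).

Lemma bitcomb_inj_gen l' : (l' <= m)%N -> injective (@bitcomb F v l').
Proof.
case: l' => [|l'] Hl' b b' E.
  by apply/ffunP => -[].
pose ext (c : {ffun 'I_l'.+1 -> bool}) :=
  [ffun j : 'I_m => if (j < l'.+1)%N then c (inord j) else false].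
have extE c : bitcomb v (ext c) = bitcomb v c.
  rewrite /bitcomb.
  pose G j := if (j < l'.+1)%N && c (inord j) then v j else 0.
  transitivity (\sum_(j < l'.+1) G j); last first.
    by apply: eq_bigr => j _; rewrite /G ltn_ord inord_val.
  rewrite (big_ord_widen m G Hl') [RHS]big_mkcond.
  apply: eq_bigr => j _; rewrite ffunE /G.
  by case: (j < l'.+1)%N.
have Eext : ext b = ext b'.
  by case: Hbij => g gK _; rewrite -(gK (ext b)) -(gK (ext b')) !extE E.
apply/ffunP => j.
have := congr1 (fun f : {ffun 'I_m -> bool} => f (widen_ord Hl' j)) Eext.
by rewrite !ffunE /= ltn_ord inord_val.
Qed.


Lemma kernel (P : {poly 'F_2}) : (size P <= m * 2 ^ l)%N ->
  (forall b : {ffun 'I_l -> bool}, evalF2 P (v k + bitcomb v b) = 0) -> P = 0.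
Proof.
move=> Hs Hz; apply/eqP; apply/negPn/negP => P0.
set Q := map_poly ((@f2 F)) P.
have lc : (@f2 F) (lead_coef P) != 0.
  have : lead_coef P != 0 by rewrite lead_coef_eq0.
  by case: (f2_cases (lead_coef P)) => ->; rewrite ?eqxx // /f2 /= oner_neq0.
have sQ : size Q = size P := size_map_poly_id0 lc.
have Q0 : Q != 0 by rewrite -size_poly_eq0 sQ size_poly_eq0.
set rs := [seq (v k + bitcomb v b) ^+ (2 ^ j) | b <- enum {ffun 'I_l -> bool}, j <- iota 0 m].
have Hroot : all (root Q) rs.
  apply/allP => x /allpairsP [[b j] [_ _ ->]] /=.
  by rewrite /root -evalF2E (evalF2_pow2 ch) Hz expr0n expn_eq0.
have Huniq : uniq rs.
  apply: allpairs_uniq; [exact: enum_uniq | exact: iota_uniq |].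
  move=> [b j] [b' j'] /allpairsP [[b1 j1] [_ Hj1 [-> ->]]].
  move=> /allpairsP [[b2 j2] [_ Hj2 [-> ->]]] /= E.
  rewrite !mem_iota !add0n in Hj1 Hj2.
  have := congr1 (iter l (s (F:=F))) E.
  rewrite !(iter_s_pow ch) !iter_w => /orbit_inj Ej.
  have Ej' := Ej Hj1 Hj2; rewrite Ej' in E.
  move/(pow2_inj ch)/addrI/(bitcomb_inj_gen l_le_m): E => ->.
  by rewrite Ej'.
have := max_poly_roots Q0 Hroot Huniq.
rewrite size_allpairs size_iota -cardT card_ffun card_bool card_ord sQ.
by rewrite mulnC ltnNge Hs.
Qed.

End Orbit.

Theorem proposition2 (F : finFieldType) (lm m l n : nat) (v : nat -> F) :
  (1 <= lm)%N -> m = (2 ^ lm)%N -> #|F| = (2 ^ m)%N ->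
  cantor_basis m v ->
  (l < m %/ 2)%N -> n = (m * 2 ^ l)%N ->
  forall y : F -> F,
    exists! A : {poly 'F_2},
      (size A <= n)%N /\
      (forall u : F, u \in Vspan v l -> evalF2 A (v (l + m %/ 2)%N + u) = y u).
Proof.
move=> Hlm -> Hcard [Hbij hv0 hvs] Hl -> y.
case: lm Hlm Hcard Hbij hvs Hl => [//|lm] _ Hcard Hbij hvs Hl.
have p2 : prime 2 by [].
have ch : (2%N \in [pchar F]) := card_finPcharP Hcard p2.
have Hh : (2 ^ lm.+1 %/ 2 = 2 ^ lm)%N by rewrite expnS mulKn.
rewrite Hh in Hl *.
set N := (2 ^ lm.+1 * 2 ^ l)%N.
pose toP (c : {ffun 'I_N -> 'F_2}) : {poly 'F_2} := \poly_(i < N) oapp c 0 (insub i).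
pose phi (c : {ffun 'I_N -> 'F_2}) : {ffun {ffun 'I_l -> bool} -> F} :=
  [ffun b => evalF2 (toP c) (v (l + 2 ^ lm)%N + bitcomb v b)].
have phi_inj : injective phi.
  move=> c c' E.
  have : toP c - toP c' = 0.
    apply: (kernel ch Hcard hv0 hvs Hl Hbij).
      have -> : toP c - toP c' = \poly_(i < N) (oapp c 0 (insub i) - oapp c' 0 (insub i)).
        by apply/polyP => i; rewrite coefB !coef_poly; case: (i < N)%N; rewrite ?subr0.
      exact: size_poly.
    move=> b; rewrite (evalF2B ch).
    have := congr1 (fun f : {ffun {ffun 'I_l -> bool} -> F} => f b) E.
    by rewrite !ffunE => ->; rewrite subrr.
  move/eqP; rewrite subr_eq0 => /eqP Ep.
  apply/ffunP => i; have := congr1 (fun p : {poly 'F_2} => p`_i) Ep.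
  by rewrite /= !coef_poly ltn_ord !valK.
have Hc : (#|{ffun {ffun 'I_l -> bool} -> F}| <= #|{ffun 'I_N -> 'F_2}|)%N.
  rewrite !card_ffun card_bool !card_ord Hcard -expnM.
  by have -> : (Zp_trunc (pdiv 2)).+2 = 2%N by [].

pose g := [ffun b : {ffun 'I_l -> bool} => y (bitcomb v b)].
have /codomP [c Hgc] := inj_card_onto phi_inj Hc g.
exists (toP c); split.
  split; first exact: size_poly.
  move=> u /imsetP [b _ ->].
  have := congr1 (fun f : {ffun {ffun 'I_l -> bool} -> F} => f b) Hgc.
  by rewrite !ffunE => <-.
move=> A [HA HAy].
pose c' := [ffun i : 'I_N => A`_i].
have Ec' : toP c' = A.
  apply/polyP => i; rewrite coef_poly; case: ltnP => Hi; first by rewrite insubT /= ffunE.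
  by rewrite nth_default // (leq_trans HA Hi).
have : phi c' = g.
  apply/ffunP => b; rewrite !ffunE Ec' HAy //; apply/imsetP; by exists b.
by rewrite Hgc => /phi_inj <-.
Qed.
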